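(* If $c$ is the characteristic of a field (so $c=0$ or $c$ is a prime), then the set of non-negative integers is the disjoint union of $S_c$ and $T_c$.
   Context: Sets $S_c$: $S_0$ is the set of all non-negative integers; $S_2=\{0\}$; $S_3$ is the smallest set of non-negative integers containing $0$ such that whenever $a$ is an even element of $S_3$, the integers $3a,3a+1,3a+4,3a+5$ lie in $S_3$; for a prime $p\ge5$, with $\pi_p$ the largest integer $<p/3$, $S_p$ is the smallest set of non-negative integers containing $[0,2\pi_p]\cap\mathbb Z$ such that whenever $\theta$ is a non-negative even element of $S_p$, all non-negative integers in $[p\theta-2\pi_p-1,p\theta+2\pi_p]$ lie in $S_p$. Sets $T_c$: $T_0=\emptyset$; $T_2$ is the set of all positive integers; for an odd prime $p$, a non-negative integer $a$ lies in $T_p$ iff there exist an odd integer $J$ and $q=p^e$ with $e\ge1$ such that $Jq-\{\frac q3\}\le a<Jq+\{\frac q3\}$, where for an integer $b$, $\{\frac b3\}$ denotes the integer nearest to $b/3$ (i.e. $\frac b3,\frac{b-1}3,\frac{b+1}3$ according as $b\equiv0,1,2\pmod 3$). *)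

(* Defs.v *)
From mathcomp Require Import all_boot all_order all_algebra.
Set Implicit Arguments. Unset Strict Implicit. Unset Printing Implicit Defensive.
Import Order.TTheory GRing.Theory Num.Theory.

Inductive S3 : nat -> Prop :=
| S3_0 : S3 0
| S3_0mod (a : nat) : S3 a -> ~~ odd a -> S3 (3 * a)
| S3_1mod (a : nat) : S3 a -> ~~ odd a -> S3 (3 * a + 1)
| S3_4mod (a : nat) : S3 a -> ~~ odd a -> S3 (3 * a + 4)
| S3_5mod (a : nat) : S3 a -> ~~ odd a -> S3 (3 * a + 5).

(* pi_p = largest integer < p/3  (for p not divisible by 3) *)
Definition pi_p (p : nat) : nat := (p - 1) %/ 3.

Inductive Sp (p : nat) : nat -> Prop :=
| Sp_base (n : nat) : n <= 2 * pi_p p -> Sp p n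
| Sp_step (theta n : nat) : Sp p theta -> ~~ odd theta ->
    p * theta <= n + 2 * pi_p p + 1 -> n <= p * theta + 2 * pi_p p -> Sp p n.

Definition S (c n : nat) : Prop :=
  if c == 0 then True
  else if c == 2 then n = 0
  else if c == 3 then S3 n
  else Sp c n.

(* nearest integer to b/3 *)
Definition near3 (b : nat) : nat := b.+1 %/ 3.

Definition Tp (p a : nat) : Prop :=
  exists (J : int) (e : nat), odd `|J|%N /\ (0 < e)%N /\
    let q := (p ^ e)%N in
    (J * q%:Z - (near3 q)%:Z <= a%:Z)%R /\ (a%:Z < J * q%:Z + (near3 q)%:Z)%R.

Definition T (c a : nat) : Prop :=
  if c == 0 then False
  else if c == 2 then is_true (0 < a)%N
  else Tp c a.

(* Main.v *)
From Stdlib Require Import Lia ZArith Classical.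
Require Import Defs.
From mathcomp Require Import all_boot all_order all_algebra.
Import Order.TTheory GRing.Theory Num.Theory.

Ltac nat2 :=
  repeat match goal with
  | H : is_true (leq _ _) |- _ => move/ssrnat.leP: H => H
  | H : is_true (ltn _ _) |- _ => move/ssrnat.ltP: H => H
  | H : context [muln] |- _ => rewrite -multE in H
  | H : context [addn] |- _ => rewrite -plusE in H
  | H : context [subn] |- _ => rewrite -minusE in H
  end;
  rewrite -?multE -?plusE -?minusE;
  try match goal with |- is_true (leq _ _) => apply/ssrnat.leP end.

Lemma div3 k r : r < 3 -> (k * 3 + r) %/ 3 = k.
Proof. move=> h; rewrite divnMDl // divn_small // addn0 //. Qed.

Lemma near3_spec q : ~~ (3 %| q) -> 3 * near3 q + 1 = q \/ 3 * near3 q = q + 1.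
Proof.
move=> h; rewrite /near3.
have hq := divn_eq q 3.
have hr : q %% 3 < 3 by rewrite ltn_mod.
move: h; rewrite /dvdn.
move: (q %/ 3) (q %% 3) hq hr => k r hq hr.
case: r hq hr => [|[|[|r]]] hq hr hn //.

- left. have -> : q.+1 = k * 3 + 2 by rewrite hq; nat2; lia.
  rewrite div3 //. rewrite hq. nat2. lia.
- right. have -> : q.+1 = (k+1) * 3 + 0 by rewrite hq; nat2; lia.
  rewrite div3 //. rewrite hq. nat2. lia.
Qed.

Lemma near3_lt q : 0 < q -> near3 q < q.
Proof. move=> h; rewrite /near3 ltn_divLR //. nat2. lia. Qed.

Definition Tlev (p e a : nat) := exists j, odd j /\
  j * p ^ e <= a + near3 (p ^ e) /\ a < j * p ^ e + near3 (p ^ e).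

Lemma Tp_iff p a : 0 < p -> (Tp p a <-> exists e, 0 < e /\ Tlev p e a).
Proof.
move=> hp; split.
- case=> J [e [hJ [he /= [h1 h2]]]]; exists e; split => //.
  have hq : 0 < p ^ e by rewrite expn_gt0 hp.
  have hlt := near3_lt _ hq.
  case: J hJ h1 h2 => [j|m] hJ h1 h2.
  + exists j; split => //.
    move: h1 h2; rewrite lerBlDr -!PoszM -!PoszD lez_nat ltz_nat => h1 h2.
    by split.
  + exfalso. move: h2. rewrite NegzE mulNr -PoszM addrC ltrBrDr -PoszD ltz_nat.
    move=> h2. nat2. nia.
- case=> e [he [j [hj [h1 h2]]]]. exists (Posz j), e; split => //; split => //=.
  rewrite lerBlDr -!PoszM -!PoszD lez_nat ltz_nat. by split.
Qed.

Lemma oddE n : odd n -> exists x, n = 2 * x + 1.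
Proof.
move=> h; have := odd_double_half n; rewrite h -muln2 => hn.
exists n./2. simpl in hn. nat2. lia.
Qed.

Lemma evenE n : ~~ odd n -> exists x, n = 2 * x.
Proof.
move=> h; have := odd_double_half n; rewrite (negbTE h) -muln2 => hn.
exists n./2. simpl in hn. nat2. lia.
Qed.

Section Shift.
Local Open Scope Z_scope.
Lemma shift p e th n (s : Z) : odd p -> ~~ odd th ->
  Z.of_nat n = Z.of_nat p * Z.of_nat th + s ->
  (forall t : Z, (exists m, t = 2 * m + 1) ->
     ((- Z.of_nat (near3 (p^e)%N) <= t < Z.of_nat (near3 (p^e)%N)) <->
      (- Z.of_nat (near3 (p^e.+1)%N) <= Z.of_nat p * t + s < Z.of_nat (near3 (p^e.+1)%N)))) ->
  (Tlev p e.+1 n <-> Tlev p e th).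
Proof.
move=> hp hth hn key. rewrite /Tlev expnS. rewrite expnS in key.
have hQ : odd (p^e)%N by rewrite oddX hp orbT.
move: (p^e)%N hQ key => Q hQ key.
move: (near3 Q) (near3 (p*Q)%N) key => R R' key.
case: (evenE _ hth) => x hx.
split => -[j [hj [h1 h2]]]; exists j; split => //;
  rewrite ?(mulnCA j p Q) in h1 h2 *;
  (have [y hy] : exists y, (j * Q = 2 * y + 1)%N by apply: oddE; rewrite oddM hj hQ);
  (have hw : Z.of_nat th - Z.of_nat (j*Q)%N = 2 * (Z.of_nat x - Z.of_nat y - 1) + 1 by rewrite hx hy; nat2; lia);
  (have [k1 k2] := key _ (ex_intro _ _ hw)); rewrite hx hy in k1 k2 h1 h2 hn *; nat2.
- have := k2 ltac:(lia) => hk. split; nat2; lia.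
- have := k1 ltac:(lia) => hk. split; nat2; lia.
Qed.
End Shift.

Lemma generic (S T : nat -> Prop) (W : nat -> nat -> Prop) :
  S 0 -> ~ T 0 ->
  (forall n, S n -> exists th, ~~ odd th /\ S th /\ W th n) ->
  (forall th n, ~~ odd th -> S th -> W th n -> S n) ->
  (forall th n, ~~ odd th -> W th n -> n = 0 \/ th < n) ->
  (forall th n, ~~ odd th -> W th n -> (T n <-> T th)) ->
  (forall n, (exists th, ~~ odd th /\ W th n) \/ T n) ->
  forall n, (S n \/ T n) /\ ~ (S n /\ T n).
Proof.
move=> S0 T0 Sinv Srule Word Tshift Wex.
suff key : forall n, S n <-> ~ T n.
  move=> n; have := key n; case: (classic (T n)); tauto.
elim/ltn_ind => n IH; split.
- move=> /Sinv [th [hth [Sth Wth]]].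
  case: (Word _ _ hth Wth) => [->|lt] //.
  rewrite (Tshift _ _ hth Wth); exact/(IH _ lt).
- move=> nT; case: (Wex n) => [[th [hth Wth]]|] //.
  case: (Word _ _ hth Wth) => [->|lt] //.
  apply: (Srule _ _ hth _ Wth); apply/(IH _ lt).
  by rewrite -(Tshift _ _ hth Wth).
Qed.

Definition Tn p a := exists e, 0 < e /\ Tlev p e a.

Lemma Tlev0 p a : ~ Tlev p 0 a.
Proof. rewrite /Tlev expn0 (_ : near3 1 = 0) // => -[j [_ [h1 h2]]]. nat2. lia. Qed.

Lemma Tn0 p : 0 < p -> ~ Tn p 0.
Proof.
move=> hp [e [he [j [hj [h1 h2]]]]].
have hq : 0 < p ^ e by rewrite expn_gt0 hp.
have hlt := near3_lt _ hq.
have hj1 : 0 < j by case: j hj {h1 h2}.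
move: (p^e) (near3 (p^e)) hq hlt h1 h2 => Q R hq hlt h1 h2. nat2. nia.
Qed.

Section TnShift.
Local Open Scope Z_scope.
Lemma Tn_shift p th n (s : Z) : odd p -> ~~ odd th ->
  Z.of_nat n = Z.of_nat p * Z.of_nat th + s ->
  (forall e, forall t : Z, (exists m, t = 2 * m + 1) ->
     ((- Z.of_nat (near3 (p^e)%N) <= t < Z.of_nat (near3 (p^e)%N)) <->
      (- Z.of_nat (near3 (p^e.+1)%N) <= Z.of_nat p * t + s < Z.of_nat (near3 (p^e.+1)%N)))) ->
  (Tn p n <-> Tn p th).
Proof.
move=> hp hth hn key; split.
- case=> -[|e] [he hT] //.
  have := (@shift p e th n s hp hth hn (key e)).1 hT => hT'.
  case: e he hT hT' => [|e] he hT hT'; first by case: (Tlev0 _ _ hT').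
  by exists e.+1.
- case=> e [he hT]; exists e.+1; split => //.
  exact: (@shift p e th n s hp hth hn (key e)).2.
Qed.
End TnShift.

Section Keys.
Local Open Scope Z_scope.
Lemma keyA (p k Q R R' s t : Z) : (p = 3*k+1 \/ p = 3*k+2) -> 1 <= k ->
  (3*R+1 = Q \/ 3*R = Q+1) -> (3*R'+1 = p*Q \/ 3*R' = p*Q+1) ->
  (exists v, Q = 2*v+1) -> -(2*k+1) <= s <= 2*k -> (exists m, t = 2 * m + 1) ->
  ((-R <= t < R) <-> (-R' <= p*t + s < R')).
Proof.
intros hp hk hR hR' [v hv] hs [m hm].
assert (hu : exists u, R = 2*u).
{ destruct (Z.Even_or_Odd R) as [[u hu]|[u hu]]; [exists u; lia| lia]. }
destruct hu as [u hu].
assert (hpq : p*Q = 3*(p*R) + p \/ p*Q = 3*(p*R) - p).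
{ destruct hR as [h|h]; [left|right]; [rewrite <- h | replace Q with (3*R-1) by lia]; ring. }
assert (hD : -(p - 2*k - 1) <= R' - p*R <= p - 2*k - 1) by lia.
assert (ht : t <= -R-1 \/ (-R+1 <= t <= R-1) \/ t >= R+1) by lia.
destruct ht as [ht|[ht|ht]].
- assert (p*t <= p*(-R-1)) by (apply Z.mul_le_mono_nonneg_l; lia). lia.
- assert (p*(-R+1) <= p*t) by (apply Z.mul_le_mono_nonneg_l; lia).
  assert (p*t <= p*(R-1)) by (apply Z.mul_le_mono_nonneg_l; lia). lia.
- assert (p*(R+1) <= p*t) by (apply Z.mul_le_mono_nonneg_l; lia). lia.
Qed.

Lemma key3 (R s t : Z) : (exists u, R = 2*u+1) -> 0 <= s <= 5 -> (exists m, t = 2 * m + 1) ->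
  ((-R <= t < R) <-> (-(3*R) <= 3*t + s < 3*R)).
Proof. intros [u hu] hs [m hm]. lia. Qed.

Lemma key30 (s t : Z) : (s = 0 \/ s = 1 \/ s = 4 \/ s = 5) -> (exists m, t = 2 * m + 1) ->
  ((-0 <= t < 0) <-> (-1 <= 3*t + s < 1)).
Proof. intros hs [m hm]. lia. Qed.
End Keys.

Lemma caseP p : prime p -> p != 2 -> p != 3 ->
  forall n, (Sp p n \/ Tp p n) /\ ~ (Sp p n /\ Tp p n).
Proof.
move=> pp p2 p3.
have hp0 : 0 < p by apply: prime_gt0.
have hodd : odd p by case: (even_prime pp) => // h; rewrite h in p2.
have h3 : forall e, ~~ (3 %| p ^ e).
  move=> e; rewrite Euclid_dvdX // dvdn_prime2 //.
  by rewrite eq_sym (negbTE p3).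
have h5 : 4 < p.
  have := prime_gt1 pp; move: pp p2 p3.
  by case: p {hp0 hodd h3} => [|[|[|[|[|p]]]]].
have hk : (p = 3 * pi_p p + 1 \/ p = 3 * pi_p p + 2) /\ 1 <= pi_p p.
  have hq := divn_eq p 3.
  have hr : p %% 3 < 3 by rewrite ltn_mod.
  have := h3 1; rewrite expn1 /dvdn /pi_p.
  move: (p %/ 3) (p %% 3) hq hr => k r hq hr.
  case: r hq hr => [|[|[|r]]] hq hr hn //.
  + have -> : p - 1 = k * 3 + 0 by rewrite hq; nat2; lia.
    rewrite div3 //. split; nat2; lia.
  + have -> : p - 1 = k * 3 + 1 by rewrite hq; nat2; lia.
    rewrite div3 //. split; nat2; lia.
have hr1 := near3_spec _ (h3 1). rewrite expn1 in hr1.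
suff G : forall n, (Sp p n \/ Tn p n) /\ ~ (Sp p n /\ Tn p n).
  move=> n; rewrite Tp_iff //; exact: G.
apply: (@generic (Sp p) (Tn p) (fun th n => p * th <= n + 2 * pi_p p + 1 /\ n <= p * th + 2 * pi_p p)).
- by apply: Sp_base.
- exact: Tn0.
- move=> n; case => [n' hn'|th n' Sth hth h1 h2].
  + exists 0; split => //; split; first by apply: Sp_base.
    case: hk => hk1 hk2. split; nat2; lia.
  + by exists th.
- move=> th n hth Sth [h1 h2]; exact: (Sp_step Sth hth h1 h2).
- move=> th n hth [h1 h2].
  case: (evenE _ hth) => x hx; subst th.
  case: hk => hk1 hk2.
  case: x h1 h2 {hth} => [|x] h1 h2.
    case: n h1 h2 => [|n] h1 h2; [by left | right; nat2; lia].
  right. nat2. nia.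
- move=> th n hth [h1 h2].
  apply: (@Tn_shift p th n (Z.sub (Z.of_nat n) (Z.mul (Z.of_nat p) (Z.of_nat th))) hodd hth); first by lia.
  move=> e t ht.
  have hQ := near3_spec _ (h3 e).
  have hQ' := near3_spec _ (h3 e.+1).
  rewrite expnS in hQ'.
  have [v hv] : exists v, p ^ e = 2 * v + 1 by apply: oddE; rewrite oddX hodd orbT.
  rewrite expnS.
  case: hk => hk1 hk2.
  move: (p ^ e) (near3 (p ^ e)) (near3 (p * p ^ e)) hQ hQ' hv => Q R R' hQ hQ' hv.
  nat2.
  apply: (keyA (Z.of_nat p) (Z.of_nat (pi_p p)) (Z.of_nat Q)); try lia.
  exists (Z.of_nat v); lia.
  exact ht.
- move=> n.
  have hq := divn_eq n (2 * p).
  have hm : n %% (2 * p) < 2 * p by rewrite ltn_mod muln_gt0 hp0.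
  move: (n %/ (2 * p)) (n %% (2 * p)) hq hm => x m hq hm.
  case: hk => hk1 hk2.
  case: (leqP m (2 * pi_p p)) => hm1.
    left; exists (2 * x); split; first by rewrite oddM.
    rewrite hq; split; nat2; nia.
  case: (leqP (2 * p - 2 * pi_p p - 1) m) => hm2.
    left; exists (2 * x + 2); split; first by rewrite oddD oddM.
    rewrite hq; split; nat2; nia.
  right; exists 1; split => //; exists (2 * x + 1); split; first by rewrite oddD oddM.
  rewrite expn1 hq; move: (near3 p) hr1 => r1 hr1.
  split; nat2; nia.
Qed.

Lemma near3_3 e : near3 (3 ^ e.+1) = 3 ^ e.
Proof. by rewrite /near3 expnS -addn1 mulnC div3. Qed.

Lemma case3 : forall n, (S3 n \/ Tp 3 n) /\ ~ (S3 n /\ Tp 3 n).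
Proof.
suff G : forall n, (S3 n \/ Tn 3 n) /\ ~ (S3 n /\ Tn 3 n).
  move=> n; rewrite Tp_iff //; exact: G.
apply: (@generic S3 (Tn 3) (fun a n => n = 3 * a \/ n = 3 * a + 1 \/ n = 3 * a + 4 \/ n = 3 * a + 5)).
- exact: S3_0.
- exact: Tn0.
- move=> n; case => [|a Sa ha|a Sa ha|a Sa ha|a Sa ha].
  + by exists 0; split => //; split => //; [exact: S3_0 | left].
  + by exists a; do !split => //; left.
  + by exists a; do !split => //; right; left.
  + by exists a; do !split => //; right; right; left.
  + by exists a; do !split => //; right; right; right.
- move=> a n ha Sa [->|[->|[->|->]]]; by constructor.
- move=> a n ha hw; case: (posnP n) => [->|hn]; [by left| right].
  nat2. lia.
- move=> a n ha hw.
  apply: (@Tn_shift 3 a n (Z.sub (Z.of_nat n) (Z.mul (Z.of_nat 3) (Z.of_nat a))) isT ha); first by lia.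
  move=> [|e] t ht.
  + rewrite expn0 (_ : near3 1 = 0) // near3_3 expn0.
    apply: key30 ht. nat2. lia.
  + rewrite !near3_3 expnS.
    have [v hv] : exists v, 3 ^ e = 2 * v + 1 by apply: oddE; rewrite oddX orbT.
    move: (3 ^ e) hv => Q hv. nat2.
    case: ht => m hm. lia.
- move=> n.
  have hq := divn_eq n 6.
  have hm : n %% 6 < 6 by rewrite ltn_mod.
  move: (n %/ 6) (n %% 6) hq hm => x m hq hm.
  case: m hq hm => [|[|[|[|[|[|m]]]]]] hq hm //.
  + left; exists (2 * x); split; first by rewrite oddM.
    left; rewrite hq; nat2; lia.
  + left; exists (2 * x); split; first by rewrite oddM.
    right; left; rewrite hq; nat2; lia.
  + right; exists 1; split => //; exists (2 * x + 1); split; first by rewrite oddD oddM.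
    rewrite expn1 (_ : near3 3 = 1) // hq. split; nat2; lia.
  + right; exists 1; split => //; exists (2 * x + 1); split; first by rewrite oddD oddM.
    rewrite expn1 (_ : near3 3 = 1) // hq. split; nat2; lia.
  + left; exists (2 * x); split; first by rewrite oddM.
    right; right; left; rewrite hq; nat2; lia.
  + left; exists (2 * x); split; first by rewrite oddM.
    right; right; right; rewrite hq; nat2; lia.
Qed.

Theorem theorem6p1 (c : nat) (hc : c = 0 \/ prime c) :
  forall n : nat, (S c n \/ T c n) /\ ~ (S c n /\ T c n).
Proof.
move=> n; rewrite /S /T.
case: hc => [hc0|pc]; first by subst c; simpl; tauto.
have c0 : (c == 0) = false by apply/negbTE; rewrite -lt0n prime_gt0.
rewrite c0.
have [hc2|c2] := eqVneq c 2.
  subst c => /=. case: n => [|n] /=; split; try tauto; by move=> [].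
have [hc3|c3] := eqVneq c 3.
  subst c => /=. exact: case3.
exact: caseP.
Qed.
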